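(* Let $\mathcal{X}=(\mathbf{x}_n)_{n=1}^\infty$ be a spreading sequence in a quasi-Banach space $\mathbb{X}$. Then $\mathcal{X}$ is bounded.
   Context: For a sequence $(\mathbf{x}_n)$ in $\mathbb{X}$, $\mathcal{N}\subseteq\mathbb{N}$ and an injective $\psi\colon\mathcal{N}\to\mathbb{N}$, $\psi$ is a translation if the assignment $\mathbf{x}_n\mapsto\mathbf{x}_{\psi(n)}$, $n\in\mathcal{N}$, defines a linear map on $\operatorname{span}(\mathbf{x}_n\colon n\in\mathcal{N})$ extending to an isomorphism $T_\psi$ from the closed linear span of $\{\mathbf{x}_n\colon n\in\mathcal{N}\}$ onto the closed linear span of $\{\mathbf{x}_n\colon n\in\psi(\mathcal{N})\}$. The sequence is spreading if every increasing map $\psi\colon\mathbb{N}\to\mathbb{N}$ is a translation. *)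

(* Defs.v *)
(* Quasi-Banach spaces over a numeric field K (covers the
   real field R : realType and the complex field R[i]). *)
From mathcomp Require Import all_boot all_order all_algebra.
Set Implicit Arguments. Unset Strict Implicit. Unset Printing Implicit Defensive.
Import Order.TTheory GRing.Theory Num.Theory.
Local Open Scope ring_scope.

Section QuasiBanach.
Variables (K : numFieldType) (V : lmodType K) (nrm : V -> K).

Definition quasi_norm : Prop :=
  [/\ forall v, 0 <= nrm v,
      forall v, nrm v = 0 -> v = 0,
      forall (a : K) v, nrm (a *: v) = `|a| * nrm v
    & exists kappa : K, 1 <= kappa /\
        forall u v, nrm (u + v) <= kappa * (nrm u + nrm v)].

Definition cauchy_seq (u : nat -> V) : Prop :=
  forall e : K, 0 < e -> exists N, forall m n, (N <= m)%N -> (N <= n)%N ->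
    nrm (u m - u n) < e.

Definition converges_to (u : nat -> V) (l : V) : Prop :=
  forall e : K, 0 < e -> exists N, forall n, (N <= n)%N -> nrm (u n - l) < e.

Definition complete_qn : Prop :=
  forall u, cauchy_seq u -> exists l, converges_to u l.

Definition quasi_Banach : Prop := quasi_norm /\ complete_qn.

Definition lspan (S : V -> Prop) : V -> Prop :=
  fun v => exists (n : nat) (c : 'I_n -> K) (f : 'I_n -> V),
    (forall i, S (f i)) /\ v = \sum_(i < n) c i *: f i.

Definition qclosure (A : V -> Prop) : V -> Prop :=
  fun v => forall e : K, 0 < e -> exists a, A a /\ nrm (v - a) < e.

Definition clspan (S : V -> Prop) : V -> Prop := qclosure (lspan S).

Definition linear_on (A : V -> Prop) (T : V -> V) : Prop :=
  forall (a : K) u v, A u -> A v -> T (a *: u + v) = a *: T u + T v.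

Definition bounded_on (A : V -> Prop) (T : V -> V) : Prop :=
  exists C : K, forall u, A u -> nrm (T u) <= C * nrm u.

Definition isomorphism_onto (A B : V -> Prop) (T : V -> V) : Prop :=
  exists S : V -> V,
    [/\ forall u, A u -> B (T u),
        forall v, B v -> A (S v),
        (forall u, A u -> S (T u) = u) /\ (forall v, B v -> T (S v) = v),
        (linear_on A T /\ bounded_on A T)
      & (linear_on B S /\ bounded_on B S)].

(* psi : N -> nat (given as a total function on nat, relevant on N) injective
   on N is a translation for x if n |-> x (psi n) extends to an isomorphism
   T_psi from [x_n : n in N] onto [x_n : n in psi(N)]. *)
Definition translation (x : nat -> V) (N : nat -> Prop) (psi : nat -> nat)
  : Prop :=
  (forall m n, N m -> N n -> psi m = psi n -> m = n) /\
  exists T : V -> V,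
    (forall n, N n -> T (x n) = x (psi n)) /\
    isomorphism_onto (clspan (fun v => exists n, N n /\ v = x n))
                     (clspan (fun v => exists n, N n /\ v = x (psi n))) T.

Definition spreading (x : nat -> V) : Prop :=
  forall psi : nat -> nat, {homo psi : m n / (m < n)%N} ->
    translation x (fun _ => True) psi.

Definition bounded_seq (x : nat -> V) : Prop :=
  exists C : K, forall n, nrm (x n) <= C.

End QuasiBanach.

(* Main.v *)
Require Import Defs.
From mathcomp Require Import all_boot all_order all_algebra.
From Stdlib Require Import Classical ClassicalEpsilon.
Import Order.TTheory GRing.Theory Num.Theory.

Theorem lemma2p4 (K : numFieldType) (V : lmodType K) (nrm : V -> K)
  (x : nat -> V) :
  quasi_Banach nrm -> spreading nrm x -> bounded_seq nrm x.
Proof.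
move=> [[n0 _ nZ _] _] Hs.
apply: NNPP => Hnb.
have H1 : forall C : K, exists n, ~ (nrm (x n) <= C)%R.
  move=> C; apply: NNPP => H; apply: Hnb; exists C => n.
  apply: NNPP => H'; apply: H; by exists n.
have tail : forall p (t : K), (0 <= t)%R -> exists m, (p <= m)%N /\ ~ (nrm (x m) <= t)%R.
  elim=> [|p IH] t t0.
    have [n Hn] := H1 t; by exists n.
  have t1 : (0 <= t + nrm (x p))%R by rewrite addr_ge0.
  have [m [pm Hm]] := IH _ t1.
  case: (eqVneq m p) => [Emp|ne].
    exfalso; apply: Hm; rewrite Emp; by rewrite lerDr.
  exists m; split; first by rewrite ltn_neqAle eq_sym ne pm.
  move=> Hle; apply: Hm; apply: le_trans Hle _; by rewrite lerDl.
have G : forall p j, {m | (p <= m)%N /\ ~ (nrm (x m) <= nrm (x j) * nrm (x j))%R}.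
  move=> p j; apply: constructive_indefinite_description; apply: tail.
  by rewrite mulr_ge0.
pose psi := fix f j := match j with 0 => sval (G 0%N 0%N) | k.+1 => sval (G (f k).+1 k.+1) end.
have psiP : forall j, ~ (nrm (x (psi j)) <= nrm (x j) * nrm (x j))%R.
  by case=> [|k] /=; [exact: (proj2 (svalP (G _ _))) | exact: (proj2 (svalP (G _ _)))].
have inc : forall j, (psi j < psi j.+1)%N.
  move=> j /=; exact: (proj1 (svalP (G _ _))).
have homo : {homo psi : m n / (m < n)%N}.
  apply: homo_ltn => //; move=> a b c; exact: ltn_trans.
have [_ [T [Tx [S [_ _ _ [_ [C HC]] _]]]]] := Hs psi homo.
have nrm0 : (nrm 0 = 0)%R.
  by rewrite -(scale0r (0%R : V)) nZ normr0 mul0r.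
have mem : forall j, clspan nrm (fun v => exists n, True /\ v = x n) (x j).
  move=> j e e0; exists (x j); split; last by rewrite subrr nrm0.
  exists 1%N, (fun _ => 1%R), (fun _ => x j); split; first by move=> i; exists j.
  by rewrite big_ord1 scale1r.
have [j Hj] := H1 `|C|%R.
have hb := HC (x j) (mem j); rewrite Tx // in hb.
apply: (psiP j).
have a0 := n0 (x j).
have b0 := n0 (x (psi j)).
have Ca0 : (0 <= C * nrm (x j))%R := le_trans b0 hb.
apply: (le_trans hb).
apply: (le_trans (real_ler_norm (ger0_real Ca0))).
rewrite normrM (ger0_norm a0).
apply: ler_wpM2r => //.
have : (`|C| < nrm (x j))%R.
  by rewrite real_ltNge ?ger0_real //; apply/negP.
exact: ltW.
Qed.
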